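(* Let $d\ge 2$ and let $\{|\phi^a_x\rangle\}_{a=0}^{d-1}$, $x=0,\dots,d$, be a complete set of $d+1$ mutually unbiased bases of $\mathbb{C}^d$. Then for every function $\lambda:\{0,\dots,d\}\to\{0,\dots,d-1\}$, $$\Big\|\sum_{x=0}^{d}|\phi^{\lambda(x)}_x\rangle\langle\phi^{\lambda(x)}_x|\Big\|_\infty\le 1+\sqrt d .$$ Equivalently, the operators $F_{a|x}=\frac{1}{1+\sqrt d}|\phi^a_x\rangle\langle\phi^a_x|$ satisfy $F_{a|x}\ge 0$ and $\sum_{a,x}\delta_{a,\lambda(x)}F_{a|x}\le\mathbb{I}$ for every such $\lambda$. *)

(* Defs.v *)
From HB Require Import structures.
From mathcomp Require Import all_boot all_order all_algebra.
From mathcomp Require Import complex.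
From mathcomp Require Import reals.
Set Implicit Arguments. Unset Strict Implicit. Unset Printing Implicit Defensive.
Import Order.TTheory GRing.Theory Num.Theory.
Local Open Scope ring_scope.

Definition cdot {C : numClosedFieldType} {n : nat} (u v : 'cV[C]_n) : C :=
  \sum_(i < n) (u i 0)^* * v i 0.

Definition vnorm2 {C : numClosedFieldType} {n : nat} (v : 'cV[C]_n) : C :=
  cdot v v.

Definition ketbra {C : numClosedFieldType} {n : nat} (u : 'cV[C]_n) : 'M[C]_n :=
  u *m (map_mx Num.conj u)^T.

(* Operator-norm bound ||A||_oo <= c, stated by definition of the operator
   norm: ||A v|| <= c ||v|| for all v (squared, with c >= 0). *)
Definition opnorm_le {C : numClosedFieldType} {n : nat} (A : 'M[C]_n) (c : C) : Prop :=
  0 <= c /\ forall v : 'cV[C]_n, vnorm2 (A *m v) <= c ^+ 2 * vnorm2 v.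

(* phi x a is the a-th vector of the x-th basis; (d+1) orthonormal bases of
   C^d that are pairwise mutually unbiased. *)
Definition complete_MUB {C : numClosedFieldType} (d : nat)
    (phi : 'I_d.+1 -> 'I_d -> 'cV[C]_d) : Prop :=
  (forall x a b, cdot (phi x a) (phi x b) = (a == b)%:R) /\
  (forall x y a b, x != y -> `|cdot (phi x a) (phi y b)| ^+ 2 = d%:R^-1).

(* Main.v *)
Require Import Defs.
From HB Require Import structures.
From mathcomp Require Import all_boot all_order all_algebra.
From mathcomp Require Import complex.
From mathcomp Require Import reals.
From mathcomp Require Import ring.
Import Order.TTheory GRing.Theory Num.Theory.
Local Open Scope ring_scope.


Section S.
Variable C : numClosedFieldType.
Variable m : nat.
Implicit Types u v w : 'cV[C]_m.
Lemma cjM (a b : C) : (a * b)^* = a^* * b^*. Proof. by rewrite rmorphM. Qed.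
Lemma cjD (a b : C) : (a + b)^* = a^* + b^*. Proof. by rewrite rmorphD. Qed.
Lemma cjN (a : C) : (- a)^* = - a^*. Proof. by rewrite rmorphN. Qed.
Lemma cjS I (r : seq I) (P : pred I) (F : I -> C) :
  (\sum_(i <- r | P i) F i)^* = \sum_(i <- r | P i) (F i)^*.
Proof. by rewrite rmorph_sum. Qed.

Lemma cdotDr u v w : cdot u (v + w) = cdot u v + cdot u w.
Proof. rewrite /cdot -big_split /=; apply: eq_bigr => i _; by rewrite mxE mulrDr. Qed.
Lemma cdotZr u v a : cdot u (a *: v) = a * cdot u v.
Proof. rewrite /cdot mulr_sumr; apply: eq_bigr => i _; by rewrite mxE mulrCA. Qed.
Lemma cdotNr u v : cdot u (- v) = - cdot u v.
Proof. by rewrite -scaleN1r cdotZr mulN1r. Qed.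
Lemma cdotC u v : cdot u v = (cdot v u)^*.
Proof. rewrite /cdot cjS; apply: eq_bigr => i _; by rewrite cjM conjCK mulrC. Qed.
Lemma cdot_sumr I (r : seq I) (P : pred I) (F : I -> 'cV[C]_m) u :
  cdot u (\sum_(i <- r | P i) F i) = \sum_(i <- r | P i) cdot u (F i).
Proof.
rewrite /cdot exchange_big /=; apply: eq_bigr => j _.
by rewrite summxE mulr_sumr.
Qed.
Lemma cdot_suml I (r : seq I) (P : pred I) (F : I -> 'cV[C]_m) u :
  cdot (\sum_(i <- r | P i) F i) u = \sum_(i <- r | P i) cdot (F i) u.
Proof.
rewrite cdotC cdot_sumr cjS; apply: eq_bigr => i _; by rewrite -cdotC.
Qed.
Lemma cdotZl u v a : cdot (a *: u) v = a^* * cdot u v.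
Proof. by rewrite cdotC cdotZr cjM -cdotC. Qed.
Lemma cdotDl u v w : cdot (v + w) u = cdot v u + cdot w u.
Proof. by rewrite cdotC cdotDr cjD -!cdotC. Qed.
Lemma cdotNl u v : cdot (- v) u = - cdot v u.
Proof. by rewrite cdotC cdotNr cjN -cdotC. Qed.
Lemma cdot_ge0 u : 0 <= cdot u u.
Proof. rewrite /cdot; apply: sumr_ge0 => i _; by rewrite mulrC -normCK exprn_ge0. Qed.

Lemma ketbraE u v : ketbra u *m v = cdot u v *: u.
Proof.
apply/matrixP => i j; rewrite (ord1 j) !mxE /cdot mulr_suml.
apply: eq_bigr => k _; rewrite !mxE big_ord1 !mxE.
by rewrite [RHS]mulrC mulrA.
Qed.

Lemma amgm (a b : C) : 0 <= a -> 0 <= b -> a * b <= a ^+ 2 / 2 + b ^+ 2 / 2.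
Proof.
move=> a0 b0; rewrite -subr_ge0.
have -> : a ^+ 2 / 2 + b ^+ 2 / 2 - a * b = (a - b) ^+ 2 / 2.
  by field.
apply: divr_ge0 => //; rewrite -realEsqr realB // ger0_real //.
Qed.

Lemma core N (u : 'I_N -> 'cV[C]_m) (s : C) : 0 <= s ->
  (forall x, cdot (u x) (u x) = 1) ->
  (forall x y, x != y -> `|cdot (u x) (u y)| <= s) ->
  forall v, vnorm2 ((\sum_x ketbra (u x)) *m v) <= (1 + (N.-1)%:R * s) ^+ 2 * vnorm2 v.
Proof.
move=> s0 h1 h2 v.
set k := 1 + (N.-1)%:R * s.
have k0 : 0 <= k by rewrite addr_ge0 // mulr_ge0 // ler0n.
set c := fun x => cdot (u x) v.
have -> : (\sum_x ketbra (u x)) *m v = \sum_x c x *: u x.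
  by rewrite mulmx_suml; apply: eq_bigr => x _; rewrite ketbraE.
set w := \sum_x c x *: u x.
set S := \sum_x `|c x| ^+ 2.
have S0 : 0 <= S by apply: sumr_ge0 => x _; rewrite exprn_ge0.
have hs : cdot v w = S.
  rewrite cdot_sumr; apply: eq_bigr => x _; rewrite cdotZr normCK.
  by rewrite [cdot v _]cdotC mulrC.
have hs' : cdot w v = S by rewrite cdotC hs geC0_conj.
pose h (x y : 'I_N) := if x == y then (1 : C) else s.
have h0 : forall x y, 0 <= h x y by move=> x y; rewrite /h; case: eqP.
have hsum : forall x, \sum_y h x y = k.
  move=> x; rewrite (bigD1 x) //= /h eqxx; congr (_ + _).
  rewrite (eq_bigr (fun _ => s)); last by move=> y; rewrite eq_sym => /negbTE ->.
  by rewrite sumr_const cardC1 card_ord mulr_natl.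
have hsum' : forall y, \sum_x h x y = k.
  move=> y; rewrite -(hsum y); apply: eq_bigr => x _; by rewrite /h eq_sym.
have hN : vnorm2 w <= k * S.
  rewrite /vnorm2 -[cdot w w]ger0_norm ?cdot_ge0 //.
  rewrite {1}/w cdot_suml; apply: le_trans (ler_norm_sum _ _ _) _.
  apply: (@le_trans _ _ (\sum_x \sum_y (`|c x| ^+ 2 / 2 * h x y + `|c y| ^+ 2 / 2 * h x y))).
    apply: ler_sum => x _.
    rewrite cdotZl cdot_sumr normrM norm_conjC.
    apply: le_trans (ler_wpM2l (normr_ge0 _) (ler_norm_sum _ _ _)) _.
    rewrite mulr_sumr; apply: ler_sum => y _.
    rewrite cdotZr normrM mulrA -mulrDl.
    have hg : `|cdot (u x) (u y)| <= h x y.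
      rewrite /h; case: eqP => [->|/eqP]; first by rewrite h1 normr1.
      exact: h2.
    apply: le_trans (ler_wpM2l _ hg) _; first by rewrite mulr_ge0.
    by apply: ler_wpM2r => //; apply: amgm.
  under eq_bigr do rewrite big_split.
  rewrite big_split /= [X in _ + X <= _]exchange_big /=.
  under eq_bigr do rewrite -mulr_sumr hsum.
  under [X in _ + X <= _]eq_bigr do rewrite -mulr_sumr hsum'.
  rewrite -big_split /= mulr_sumr le_eqVlt; apply/orP; left; apply/eqP.
  by apply: eq_bigr => x _; rewrite -mulrDl -splitr mulrC.
have E := cdot_ge0 (w - k *: v).
rewrite cdotDl cdotNl !cdotDr !cdotNr !cdotZl !cdotZr geC0_conj // hs hs' in E.
have eqE : cdot w w - k * S - (k * S - k * (k * cdot v v))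
   = (k ^+ 2 * cdot v v - cdot w w) - 2 * (k * S - cdot w w) by ring.
rewrite eqE in E.
rewrite subr_ge0 in E; rewrite /vnorm2 -subr_ge0; apply: le_trans E.
by rewrite mulr_ge0 // subr_ge0.
Qed.
End S.

Theorem mainTheorem2 (R : realType) (d : nat) (hd : (2 <= d)%N)
    (phi : 'I_d.+1 -> 'I_d -> 'cV[R[i]]_d)
    (hMUB : complete_MUB phi) (lambda : 'I_d.+1 -> 'I_d) :
  opnorm_le (\sum_(x < d.+1) ketbra (phi x (lambda x))) (1 + sqrtC (d%:R)).
Proof.
have d0 : (0 < d)%N by apply: leq_trans hd.
have sq0 : sqrtC (d%:R : R[i]) != 0 by rewrite sqrtC_eq0 pnatr_eq0 -lt0n.
have -> : 1 + sqrtC (d%:R : R[i]) = 1 + (d.+1.-1)%:R * (sqrtC (d%:R))^-1.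
  by congr (_ + _); apply: (mulIf sq0); rewrite divfK // -expr2 sqrtCK.
split; first by rewrite addr_ge0 // mulr_ge0 // ?ler0n // invr_ge0 sqrtC_ge0 ler0n.
apply: core; first by rewrite invr_ge0 sqrtC_ge0 ler0n.
  by move=> x; case: hMUB => h _; rewrite h eqxx.
move=> x y nxy; case: hMUB => _ h; have := h x y (lambda x) (lambda y) nxy.
set g := cdot _ _ => hg.
rewrite -(sqrCK (normr_ge0 g)) hg le_eqVlt; apply/orP; left; apply/eqP.
have e : (d%:R : R[i])^-1 = ((sqrtC d%:R)^-1) ^+ 2 by rewrite exprVn sqrtCK.
by rewrite e sqrCK // invr_ge0 sqrtC_ge0 ler0n.
Qed.
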